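(* Let $n\ge2$. For a polar $n$-complex number $u=x_0+h_1x_1+\cdots+h_{n-1}x_{n-1}$ let $\nu(u)=\det A$, where $A$ is the $n\times n$ matrix with entries $A_{ij}=x_{(i-j)\bmod n}$, $i,j=0,\dots,n-1$. Then $$\nu(u)=\prod_{k=0}^{n-1}\big(x_0+\epsilon_kx_1+\epsilon_k^2x_2+\cdots+\epsilon_k^{n-1}x_{n-1}\big),\quad \epsilon_k=e^{2\pi i k/n},$$ so that $\nu(u)=v_+v_-\prod_{k=1}^{n/2-1}(v_k^2+\tilde v_k^2)$ for even $n$ and $\nu(u)=v_+\prod_{k=1}^{(n-1)/2}(v_k^2+\tilde v_k^2)$ for odd $n$. Moreover, for any two polar $n$-complex numbers $u',u''$ with product $u=u'u''$: $v_+=v_+'v_+''$; $v_-=v_-'v_-''$ (for even $n$); $v_k=v_k'v_k''-\tilde v_k'\tilde v_k''$ and $\tilde v_k=v_k'\tilde v_k''+\tilde v_k'v_k''$ for $k=1,\dots,\lfloor (n-1)/2\rfloor$; hence $\rho_k=\rho_k'\rho_k''$, $\nu(u)=\nu(u')\nu(u'')$, and if $\nu(u'),\nu(u'')>0$ then the amplitudes satisfy $\rho=\rho'\rho''$. If furthermore $\rho_k',\rho_k''>0$ then $\phi_k\equiv\phi_k'+\phi_k''\pmod{2\pi}$; if $v_+',v_+''\neq0$ then $\tan\theta_+=\frac{1}{\sqrt2}\tan\theta_+'\tan\theta_+''$; for even $n$, if $v_-',v_-''\ne0$ then $\tan\theta_-=\frac{1}{\sqrt2}\tan\theta_-'\tan\theta_-''$;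 and if $\rho_{k}',\rho_{k}''>0$ then $\tan\psi_{k-1}=\tan\psi_{k-1}'\tan\psi_{k-1}''$ for $k=2,\dots,\lfloor(n-1)/2\rfloor$. (Primed/double-primed quantities refer to $u'$, $u''$, unprimed ones to $u$.)
   Context: Polar $n$-complex numbers: $u=x_0+h_1x_1+\cdots+h_{n-1}x_{n-1}$, $x_j\in\mathbb{R}$, $h_0=1$, with componentwise addition and bilinear multiplication $h_jh_k=h_{(j+k)\bmod n}$. Canonical variables: $v_+=\sum_{p=0}^{n-1}x_p$; for even $n$, $v_-=\sum_{p=0}^{n-1}(-1)^px_p$; for $k=1,\dots,\lfloor(n-1)/2\rfloor$, $v_k=\sum_p x_p\cos(2\pi kp/n)$, $\tilde v_k=\sum_p x_p\sin(2\pi kp/n)$, $\rho_k=\sqrt{v_k^2+\tilde v_k^2}$; when $\rho_k>0$ the azimuthal angle $\phi_k\in[0,2\pi)$ is defined by $\cos\phi_k=v_k/\rho_k$, $\sin\phi_k=\tilde v_k/\rho_k$. Polar angles: $\tan\theta_+=\sqrt2\rho_1/v_+$, and for even $n$, $\tan\theta_-=\sqrt2\rho_1/v_-$. Planar angles: $\tan\psi_{k-1}=\rho_1/\rho_k$ for $k=2,\dots,\lfloor(n-1)/2\rfloor$. Amplitude: if $\nu(u)>0$, $\rho=\nu(u)^{1/n}$. *)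

(* Defs.v *)
From HB Require Import structures.
From mathcomp Require Import all_boot all_order all_algebra.
From mathcomp Require Import all_classical all_reals all_analysis.
From mathcomp Require Import complex.
Set Implicit Arguments. Unset Strict Implicit. Unset Printing Implicit Defensive.
Import Order.TTheory GRing.Theory Num.Theory.
Local Open Scope ring_scope.

(* A polar n-complex number u = x_0 + h_1 x_1 + ... + h_{n-1} x_{n-1} is
   represented by its component function x : nat -> R; only x 0, ..., x (n-1)
   are meaningful. *)
Section PolarNComplex.
Variable R : realType.
Variable n : nat.

(* Product: h_j h_k = h_{(j+k) mod n}, bilinear. *)
Definition pmul (x y : nat -> R) : nat -> R :=
  fun p => \sum_(j < n) \sum_(k < n | ((j + k) %% n == p)%N) x j * y k.

Definition nu (x : nat -> R) : R :=
  \det (\matrix_(i < n, j < n) x ((i + n - j) %% n)%N).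

Definition vplus (x : nat -> R) : R := \sum_(p < n) x p.
Definition vminus (x : nat -> R) : R := \sum_(p < n) (-1) ^+ p * x p.
Definition vk (k : nat) (x : nat -> R) : R :=
  \sum_(p < n) x p * cos (2 * pi * k%:R * p%:R / n%:R).
Definition vtk (k : nat) (x : nat -> R) : R :=
  \sum_(p < n) x p * sin (2 * pi * k%:R * p%:R / n%:R).
Definition rhok (k : nat) (x : nat -> R) : R :=
  Num.sqrt (vk k x ^+ 2 + vtk k x ^+ 2).

(* phi is an (the) azimuthal angle phi_k of u (only meaningful if rho_k > 0) *)
Definition is_azimuth (k : nat) (x : nat -> R) (phi : R) : Prop :=
  0 <= phi < 2 * pi /\ cos phi = vk k x / rhok k x /\ sin phi = vtk k x / rhok k x.

Definition tan_theta_plus (x : nat -> R) : R :=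
  Num.sqrt 2 * rhok 1 x / vplus x.
Definition tan_theta_minus (x : nat -> R) : R :=
  Num.sqrt 2 * rhok 1 x / vminus x.
Definition tan_psi (k : nat) (x : nat -> R) : R := rhok 1 x / rhok k x.

Definition amplitude (x : nat -> R) : R := powR (nu x) (n%:R)^-1.

Definition epsk (k : nat) : R[i] :=
  Complex (cos (2 * pi * k%:R / n%:R)) (sin (2 * pi * k%:R / n%:R)).

Definition toC (a : R) : R[i] := Complex a 0.
End PolarNComplex.

(* Main.v *)
Require Import Defs.
From HB Require Import structures.
From mathcomp Require Import all_boot all_order all_algebra.
From mathcomp Require Import all_classical all_reals all_analysis.
From mathcomp Require Import complex.
From mathcomp Require Import ring lra zify.
Import Order.TTheory GRing.Theory Num.Theory.
Local Open Scope ring_scope.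


Section Aux.
Variable R : realType.
Variable n : nat.
Hypothesis n_gt0 : (0 < n)%N.

Lemma pmul_eval (T : comNzRingType) (f : {rmorphism R -> T}) (w : T)
  (x' x'' : nat -> R) : w ^+ n = 1 ->
  \sum_(p < n) w ^+ p * f (pmul n x' x'' p) =
  (\sum_(j < n) w ^+ j * f (x' j)) * (\sum_(k < n) w ^+ k * f (x'' k)).
Proof.
move=> wn.
rewrite big_distrlr /=.
rewrite /pmul.
under eq_bigr => p _ do rewrite rmorph_sum mulr_sumr.
rewrite exchange_big /=; apply: eq_bigr => j _.
under eq_bigr => p _ do rewrite rmorph_sum mulr_sumr.
rewrite (exchange_big_dep xpredT) //=; apply: eq_bigr => k _.
rewrite (big_pred1 (Ordinal (ltn_pmod (j + k) n_gt0))); last first.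
  by move=> p; rewrite /= eq_sym.
rewrite /= (expr_mod _ wn) exprD rmorphM.
by rewrite mulrACA.
Qed.
End Aux.

Section Trig.
Variable R : realType.

Lemma cos_ne1 (t : R) : 0 < t < 2 * pi -> cos t != 1.
Proof.
move=> /andP[t0 t2]; apply/eqP => c1.
have s0 : sin t = 0.
  have := cos2Dsin2 t; rewrite c1 expr1n => h.
  have : sin t ^+ 2 = 0 by lra.
  by move/eqP; rewrite expf_eq0 /= => /eqP.
have pi0 := pi_gt0 R.
case: (ltgtP t pi) => tp.
- have := @sin_gt0_pi R t; rewrite t0 tp s0 ltxx => /(_ isT) //.
- have := @sin_gt0_pi R (t - pi).
  have -> : 0 < t - pi < pi by apply/andP; split; lra.
  have := sinDpi (t - pi); rewrite subrK s0 => h.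
  have : sin (t - pi) = 0 by lra.
  by move=> ->; rewrite ltxx => /(_ isT).
- by move: c1; rewrite tp cospi => h; lra.
Qed.

Lemma cossin_inj (a b : R) : 0 <= a < 2 * pi -> 0 <= b < 2 * pi ->
  cos a = cos b -> sin a = sin b -> a = b.
Proof.
move=> /andP[a0 a2] /andP[b0 b2] ca sa.
have h1 : cos (a - b) = 1 by rewrite cosB ca sa -!expr2 cos2Dsin2.
case: (ltgtP a b) => // ab.
- have H : 0 < b - a < 2 * pi by apply/andP; split; lra.
  by have := @cos_ne1 _ H; rewrite -opprB cosN h1 eqxx.
- have H : 0 < a - b < 2 * pi by apply/andP; split; lra.
  by have := @cos_ne1 _ H; rewrite h1 eqxx.
Qed.

Lemma cos_sin_2pik (k : nat) : cos (2 * pi * k%:R : R) = 1 /\ sin (2 * pi * k%:R : R) = 0.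
Proof.
elim: k => [|k [IHc IHs]]; first by rewrite mulr0 cos0 sin0.
have e : 2 * pi * k.+1%:R = 2 * pi * k%:R + pi *+ 2 :> R.
  by rewrite -[k.+1]addn1 natrD mulrDr mulr1 mulr_natl.
by rewrite e cosD2pi sinD2pi.
Qed.

End Trig.

Section DM.
Variable R : realType.
Variable n : nat.
Hypothesis n_gt0 : (0 < n)%N.

Lemma epsk_exp k p : epsk R n k ^+ p =
  Complex (cos (2 * pi * k%:R * p%:R / n%:R)) (sin (2 * pi * k%:R * p%:R / n%:R)).
Proof.
elim: p => [|p IH]; first by rewrite expr0 !mulr0 !mul0r cos0 sin0.
rewrite exprS IH /epsk.
simpc.
have e : 2 * pi * k%:R * p.+1%:R / n%:R = 2 * pi * k%:R / n%:R + 2 * pi * k%:R * p%:R / n%:R :> R.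
  by rewrite -[p.+1]add1n natrD; ring.
by rewrite e cosD sinD; congr Complex; ring.
Qed.

Lemma epsk_n k : epsk R n k ^+ n = 1.
Proof.
have n0 : (n%:R : R) != 0 by rewrite pnatr_eq0 -lt0n.
rewrite epsk_exp mulfK //.
by have [-> ->] := cos_sin_2pik R k.
Qed.

Definition zk (x : nat -> R) (k : nat) : R[i] :=
  \sum_(p < n) epsk R n k ^+ p * toC (x p).

Lemma zkE x k : zk x k = Complex (vk n k x) (vtk n k x).
Proof.
rewrite /zk /vk /vtk.
apply: (big_rec3 (fun c a b => c = Complex a b)) => [//|i c a b _ ->].
rewrite epsk_exp /toC; simpc; congr Complex; ring.
Qed.

Lemma mod2 a : (a < n + n)%N -> (a %% n = if (a < n) then a else (a - n))%N.
Proof.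
move=> h; case: ifP => ha; first by rewrite modn_small.
have -> : a = ((a - n) + n)%N by rewrite subnK // leqNgt ha.
by rewrite modnDr modn_small ?addnK //; lia.
Qed.

Lemma modA p i : (p < n)%N -> (i < n)%N -> (((p + i) %% n + n - i) %% n = p)%N.
Proof.
move=> hp hi; rewrite (@mod2 (p + i)%N); last by lia.
case: ifP => h.
  by rewrite (@mod2 (p + i + n - i)%N); [case: ifP; lia | lia].
by rewrite (@mod2 (p + i - n + n - i)%N); [case: ifP; lia | lia].
Qed.

Lemma modI p q i : (p < n)%N -> (q < n)%N -> (i < n)%N ->
  ((p + i) %% n = (q + i) %% n)%N -> p = q.
Proof.
move=> hp hq hi; rewrite (@mod2 (p + i)%N) ?(@mod2 (q + i)%N); try lia.
case: ifP; case: ifP; lia.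
Qed.

Lemma ang_bound k : (k < n)%N -> 0 <= 2 * @pi R * k%:R / n%:R < 2 * @pi R.
Proof.
move=> hk.
have n0 : (0 : R) < n%:R by rewrite ltr0n.
have pi0 := pi_gt0 R.
have t1 : (k%:R : R) / n%:R < 1 by rewrite ltr_pdivrMr // mul1r ltr_nat.
have t0 : (0 : R) <= k%:R / n%:R by rewrite divr_ge0.
rewrite -mulrA; apply/andP; split; nra.
Qed.

Lemma epsk_inj i j : (i < n)%N -> (j < n)%N -> epsk R n i = epsk R n j -> i = j.
Proof.
move=> hi hj [ec es].
have e := @cossin_inj R _ _ (ang_bound _ hi) (ang_bound _ hj) ec es.
have n0 : (n%:R : R) != 0 by rewrite pnatr_eq0 -lt0n.
have p0 : (2 * pi : R) != 0 by have := pi_gt0 R; lra.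
have : (i%:R : R) = j%:R.
  apply: (mulfI p0); apply: (mulIf (invr_neq0 n0)); rewrite ?mulrA; exact: e.
by move/eqP; rewrite eqr_nat => /eqP.
Qed.

Lemma circ_det x : toC (nu n x) = \prod_(k < n) zk x k.
Proof.
pose f := real_complex R.
set A := \matrix_(i < n, j < n) x ((i + n - j) %% n)%N.
have -> : toC (nu n x) = \det (map_mx f A).
  by rewrite (det_map_mx f).
set F := Vandermonde n (\row_(k < n) epsk R n k) : 'M[R[i]]_n.
have key : (map_mx f A)^T *m F = F *m diag_mx (\row_k zk x k).
  apply/matrixP => i k; rewrite mul_mx_diag !mxE.
  under eq_bigr => j _ do rewrite !mxE.
  pose h := fun p : 'I_n => Ordinal (ltn_pmod (p + i) n_gt0).
  have hinj : injective h.
    move=> p q /(congr1 val) /= e; apply: val_inj; exact: modI e.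
  rewrite (reindex_inj hinj) /= /zk mulr_sumr; apply: eq_bigr => p _.
  rewrite modA // (expr_mod _ (epsk_n k)) exprD.
  by change (f (x p)) with (toC (x p)); ring.
have dF : \det F != 0.
  rewrite det_Vandermonde; apply/prodf_neq0 => a _; apply/prodf_neq0 => b ab.
  rewrite !mxE subr_eq0; apply/eqP => /epsk_inj e.
  by move: ab; rewrite e // ltnn.
have := congr1 determinant key; rewrite det_mulmx det_tr det_mulmx det_diag.
move=> h; apply: (mulIf dF); rewrite h mulrC.
by congr (_ * _); apply: eq_bigr => k _; rewrite mxE.
Qed.

Lemma toC_rm a : toC a = real_complex R a. Proof. by []. Qed.

Lemma zk0 x : zk x 0 = toC (vplus n x).
Proof.
rewrite /zk /vplus /epsk !mulr0 !mul0r cos0 sin0 toC_rm rmorph_sum.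
by apply: eq_bigr => p _; rewrite expr1n mul1r.
Qed.

Lemma epsk_half : ~~ odd n -> epsk R n n./2 = -1.
Proof.
move=> ev.
have n0 : (n%:R : R) != 0 by rewrite pnatr_eq0 -lt0n.
have hn2 : (n%:R : R) = 2 * (n./2)%:R.
  by rewrite -{1}(odd_double_half n) (negbTE ev) add0n -muln2 natrM mulrC.
have h0 : ((n./2)%:R : R) != 0 by apply: contraNneq n0 => h0; rewrite hn2 h0 mulr0.
rewrite /epsk; have -> : 2 * pi * (n./2)%:R / n%:R = pi :> R by rewrite hn2; field.
by rewrite cospi sinpi; apply/eqP; rewrite eq_complex /= oppr0 !eqxx.
Qed.

Lemma zk_half x : ~~ odd n -> zk x n./2 = toC (vminus n x).
Proof.
move=> ev; rewrite /zk /vminus epsk_half // toC_rm rmorph_sum.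
by apply: eq_bigr => p _; rewrite rmorphM rmorphXn rmorphN1.
Qed.

Lemma epsk_conj k : (k < n)%N -> epsk R n (n - k) = conjc (epsk R n k).
Proof.
move=> kn.
have n0 : (n%:R : R) != 0 by rewrite pnatr_eq0 -lt0n.
rewrite /epsk; have -> : 2 * pi * (n - k)%:R / n%:R = - (2 * pi * k%:R / n%:R) + pi *+ 2 :> R.
  by rewrite natrB ?(ltnW kn) //; field.
by rewrite cosD2pi sinD2pi cosN sinN.
Qed.

Lemma zk_conj x k : (k < n)%N -> zk x (n - k) = conjc (zk x k).
Proof.
move=> kn; rewrite /zk epsk_conj // rmorph_sum; apply: eq_bigr => p _.
rewrite rmorphM rmorphXn toC_rm.
congr (_ * _); apply/eqP; rewrite eq_complex /= oppr0 !eqxx //.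
Qed.

Lemma zk_norm x k : zk x k * conjc (zk x k) = toC (vk n k x ^+ 2 + vtk n k x ^+ 2).
Proof. by rewrite zkE /toC; simpc; congr Complex; ring. Qed.
End DM.

Lemma tail_rev (T : comNzRingType) (G : nat -> T) m r :
  \prod_((m + 1 + r)%N <= k < (m + m + r + 1)%N) G k =
  \prod_(1 <= k < (m + 1)%N) G (m + m + r + 1 - k)%N.
Proof.
rewrite -{1}[(m + 1 + r)%N]add0n big_addn.
rewrite -[X in _ = \prod_(X <= k < _) _]/(0 + 1)%N big_addn.
rewrite big_nat_rev /=.
have -> : (m + m + r + 1 - (m + 1 + r) = m)%N by lia.
have -> : (m + 1 - 1 = m)%N by lia.
apply: eq_big_nat => k hk; congr G; lia.
Qed.

Lemma prod_regroup (T : comNzRingType) (G : nat -> T) m r :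
  \prod_(k < (m + m + r + 1)%N) G k =
  G 0%N * \prod_((m + 1)%N <= k < (m + 1 + r)%N) G k *
  \prod_(1 <= k < (m + 1)%N) (G k * G (m + m + r + 1 - k)%N).
Proof.
rewrite -(big_mkord xpredT) big_ltn; last by lia.
rewrite (big_cat_nat _ (n := (m + 1)%N)) /=; try lia.
rewrite (big_cat_nat _ (m := (m + 1)%N) (n := (m + 1 + r)%N)) /=; try lia.
rewrite tail_rev big_split /=.
by rewrite !mulrA; congr (_ * _); rewrite -!mulrA; congr (_ * _); rewrite mulrC.
Qed.

Lemma nu_even (R : realType) n (x : nat -> R) : (2 <= n)%N -> ~~ odd n ->
  nu n x = vplus n x * vminus n x *
           \prod_(1 <= k < n./2) (vk n k x ^+ 2 + vtk n k x ^+ 2).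
Proof.
move=> n2 ev.
have n0 : (0 < n)%N by lia.
have h := odd_double_half n; rewrite (negbTE ev) -muln2 /= in h.
set m := (n./2 - 1)%N.
have en : n = (m + m + 1 + 1)%N by rewrite /m; lia.
have eh : n./2 = (m + 1)%N by rewrite /m; lia.
apply: (@complexI R); rewrite -!toC_rm circ_det //.
have := prod_regroup _ (zk R n x) m 1; rewrite -en => ->.
rewrite toC_rm !rmorphM rmorph_prod.
rewrite addn1 in eh; rewrite zk0 // !addn1 big_nat1 -eh zk_half // eh.
congr (_ * _); apply: eq_big_nat => k hk.
by rewrite zk_conj ?zk_norm //; lia.
Qed.

Lemma nu_odd (R : realType) n (x : nat -> R) : (2 <= n)%N -> odd n ->
  nu n x = vplus n x *
           \prod_(1 <= k < (n.-1)./2.+1) (vk n k x ^+ 2 + vtk n k x ^+ 2).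
Proof.
move=> n2 od.
have n0 : (0 < n)%N by lia.
have o1 : odd n.-1 = false.
  by move: od; case: n {n2 n0} => //= n' /negbTE.
set m := ((n.-1)./2)%N.
have h := odd_double_half n.-1.
rewrite o1 -muln2 /= in h.
have en : n = (m + m + 0 + 1)%N by rewrite /m; lia.
apply: (@complexI R); rewrite -!toC_rm circ_det //.
have := prod_regroup _ (zk R n x) m 0; rewrite -en => ->.
rewrite toC_rm !rmorphM rmorph_prod.
rewrite zk0 // addn0 big_geq // mulr1.
congr (_ * _).
rewrite addn1; apply: eq_big_nat => k hk.
by rewrite zk_conj ?zk_norm //; lia.
Qed.

Section Mul.
Variable R : realType.
Variable n : nat.
Hypothesis n_gt0 : (0 < n)%N.
Variables x' x'' : nat -> R.
Let x := pmul n x' x''.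

Lemma toCM (a b : R) : toC (a * b) = toC a * toC b.
Proof. exact: (rmorphM (real_complex R)). Qed.

Lemma zk_mul k : zk R n x k = zk R n x' k * zk R n x'' k.
Proof. exact: (@pmul_eval R n n_gt0 _ (real_complex R) _ x' x'' (epsk_n R n n_gt0 k)). Qed.

Lemma vplus_mul : vplus n x = vplus n x' * vplus n x''.
Proof.
apply: (@complexI R); rewrite -!toC_rm toCM -!zk0 //; exact: zk_mul.
Qed.

Lemma vminus_mul : ~~ odd n -> vminus n x = vminus n x' * vminus n x''.
Proof.
move=> ev; apply: (@complexI R); rewrite -!toC_rm toCM -!zk_half //; exact: zk_mul.
Qed.

Lemma vk_mul k : vk n k x = vk n k x' * vk n k x'' - vtk n k x' * vtk n k x''
  /\ vtk n k x = vk n k x' * vtk n k x'' + vtk n k x' * vk n k x''.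
Proof.
have := zk_mul k; rewrite !zkE; simpc; by case=> -> ->.
Qed.

Lemma rhok_mul k : rhok n k x = rhok n k x' * rhok n k x''.
Proof.
rewrite /rhok; have [-> ->] := vk_mul k.
rewrite -sqrtrM ?addr_ge0 ?sqr_ge0 //; congr Num.sqrt; ring.
Qed.

Lemma nu_mul : nu n x = nu n x' * nu n x''.
Proof.
apply: (@complexI R); rewrite -!toC_rm toCM !circ_det //.
rewrite -big_split /=; apply: eq_bigr => k _; exact: zk_mul.
Qed.


Lemma azimuth_mul k phi phi' phi'' : 0 < rhok n k x' -> 0 < rhok n k x'' ->
  is_azimuth n k x phi -> is_azimuth n k x' phi' -> is_azimuth n k x'' phi'' ->
  exists m : int, phi = phi' + phi'' + 2 * pi * m%:~R.
Proof.
move=> r1 r2 [/andP[p0 p2] [c s]] [/andP[p0' p2'] [c' s']] [/andP[p0'' p2''] [c'' s'']].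
have r1' : rhok n k x' != 0 by rewrite gt_eqF.
have r2' : rhok n k x'' != 0 by rewrite gt_eqF.
have [ca sa] : cos phi = cos (phi' + phi'') /\ sin phi = sin (phi' + phi'').
  rewrite cosD sinD c s c' s' c'' s'' rhok_mul; have [-> ->] := vk_mul k.
  by split; field; rewrite ?r1' ?r2'.
have e2 : 2 * pi = pi *+ 2 :> R by rewrite mulr_natl.
case: (ltP (phi' + phi'') (2 * pi)) => h.
  exists 0; rewrite mulr0 addr0; apply: cossin_inj => //.
    by apply/andP; split.
  by apply/andP; split => //; rewrite addr_ge0.
exists (-1); rewrite mulrN1 ?mulr1.
apply: cossin_inj => //; first by apply/andP; split.
- by apply/andP; split; lra.
- by rewrite ca -[in RHS](cosD2pi) -e2 subrK.
- by rewrite sa -[in RHS](sinD2pi) -e2 subrK.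
Qed.
End Mul.

Theorem mainTheorem7 (R : realType) (n : nat) (hn : (2 <= n)%N) :
  (forall x : nat -> R,
     toC (nu n x) = \prod_(k < n) \sum_(p < n) epsk R n k ^+ p * toC (x p)
     /\ (~~ odd n -> nu n x = vplus n x * vminus n x *
           \prod_(1 <= k < n./2) (vk n k x ^+ 2 + vtk n k x ^+ 2))
     /\ (odd n -> nu n x = vplus n x *
           \prod_(1 <= k < (n.-1)./2.+1) (vk n k x ^+ 2 + vtk n k x ^+ 2)))
  /\
  (forall x' x'' : nat -> R,
     let x := pmul n x' x'' in
     vplus n x = vplus n x' * vplus n x''
     /\ (~~ odd n -> vminus n x = vminus n x' * vminus n x'')
     /\ (forall k : nat, (1 <= k <= (n.-1)./2)%N ->
           vk n k x = vk n k x' * vk n k x'' - vtk n k x' * vtk n k x''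
           /\ vtk n k x = vk n k x' * vtk n k x'' + vtk n k x' * vk n k x''
           /\ rhok n k x = rhok n k x' * rhok n k x'')
     /\ nu n x = nu n x' * nu n x''
     /\ (0 < nu n x' -> 0 < nu n x'' ->
           amplitude n x = amplitude n x' * amplitude n x'')
     /\ (forall k : nat, (1 <= k <= (n.-1)./2)%N ->
           0 < rhok n k x' -> 0 < rhok n k x'' ->
           forall phi phi' phi'' : R,
             is_azimuth n k x phi -> is_azimuth n k x' phi' ->
             is_azimuth n k x'' phi'' ->
             exists m : int, phi = phi' + phi'' + 2 * pi * m%:~R)
     /\ ((1 <= (n.-1)./2)%N -> vplus n x' != 0 -> vplus n x'' != 0 ->
           tan_theta_plus n x =
             (Num.sqrt 2)^-1 * tan_theta_plus n x' * tan_theta_plus n x'')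
     /\ (~~ odd n -> (1 <= (n.-1)./2)%N -> vminus n x' != 0 -> vminus n x'' != 0 ->
           tan_theta_minus n x =
             (Num.sqrt 2)^-1 * tan_theta_minus n x' * tan_theta_minus n x'')
     /\ (forall k : nat, (2 <= k <= (n.-1)./2)%N ->
           0 < rhok n k x' -> 0 < rhok n k x'' ->
           tan_psi n k x = tan_psi n k x' * tan_psi n k x'')).
Proof.
have n0 : (0 < n)%N by lia.
split.
  move=> x; split; first exact: circ_det.
  by split; [exact: nu_even | exact: nu_odd].
move=> x' x'' x; rewrite /x.
split; first exact: vplus_mul.
split; first exact: vminus_mul.
split.
  move=> k hk; have [-> ->] := vk_mul R n n0 x' x'' k.
  by split => //; split => //; rewrite (rhok_mul _ _ n0).
split; first exact: nu_mul.
split.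
  move=> h1 h2; rewrite /amplitude (nu_mul _ _ n0) powRM //; exact: ltW.
split.
  by move=> k hk r1 r2 phi phi1 phi2; apply: azimuth_mul.
split.
  move=> h1 v1 v2; rewrite /tan_theta_plus (rhok_mul _ _ n0) (vplus_mul _ _ n0).
  have s2 : Num.sqrt 2 != 0 :> R by rewrite sqrtr_eq0 -ltNge.
  by field; rewrite ?s2 ?v1 ?v2.
split.
  move=> ev h1 v1 v2; rewrite /tan_theta_minus (rhok_mul _ _ n0) (vminus_mul _ _ n0) //.
  have s2 : Num.sqrt 2 != 0 :> R by rewrite sqrtr_eq0 -ltNge.
  by field; rewrite ?s2 ?v1 ?v2.
move=> k hk r1 r2; rewrite /tan_psi !(rhok_mul _ _ n0) invfM; ring.
Qed.
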